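(* Suppose $X$ is a polyhedron and $\Lambda\subsetneq\Lambda_X^\star(\mathcal{A})$ is a proper subset. Then there exists $\tilde y\in\mathbb{R}^{\mathcal{A}}$ such that $\phi_{\lambda'}(\tilde y)\ge0$ for all $\lambda'\in\Lambda$, and $\phi_\lambda(\tilde y)<0$ for some $\lambda\in\Lambda_X^\star(\mathcal{A})\setminus\Lambda$.
   Context: $X\subset\mathbb{R}^n$ is a nonempty closed convex set and $\mathcal{A}\subset\mathbb{R}^n$ is a nonempty finite set such that the functions $x\mapsto\exp(\alpha^Tx)$, $\alpha\in\mathcal{A}$, are linearly independent on $X$. $\mathbb{R}^{\mathcal{A}}$ denotes real vectors indexed by $\mathcal{A}$. $\mathcal{A}\nu=\sum_\alpha\alpha\nu_\alpha$. $\sigma_X(y)=\sup\{y^Tx:x\in X\}$. $N_\beta=\{\nu\in\mathbb{R}^{\mathcal{A}}:\nu_\alpha\ge0\ \forall\alpha\neq\beta,\ \sum_\alpha\nu_\alpha=0\}$. A vector $\nu^\star\in N_\beta$ is an $X$-circuit of $\mathcal{A}$ if (1) $\nu^\star\neq0$, (2) $\sigma_X(-\mathcal{A}\nu^\star)<\infty$, and (3) $\nu^\star$ cannot be written as a convex combination of two non-proportional vectors $\nu^{(1)},\nu^{(2)}\in N_\beta$ such that the map $\nu\mapsto\sigma_X(-\mathcal{A}\nu)$ is affine on the segment $[\nu^{(1)},\nu^{(2)}]$. $\Lambda_X(\mathcal{A})$ is the set of all $X$-circuits $\lambda$ (over all $\beta\in\mathcal{A}$) normalized so that the unique negative entry equals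 $-1$. The functional form of $\lambda\in\Lambda_X(\mathcal{A})$ is the affine function $\phi_\lambda(y)=\sum_\alpha y_\alpha\lambda_\alpha+\sigma_X(-\mathcal{A}\lambda)$ on $\mathbb{R}^{\mathcal{A}}$, also identified with the vector $(\lambda,\sigma_X(-\mathcal{A}\lambda))\in\mathbb{R}^{\mathcal{A}}\times\mathbb{R}$. The circuit graph is $G_X(\mathcal{A})=\operatorname{cone}(\{\phi_\lambda:\lambda\in\Lambda_X(\mathcal{A})\}\cup\{(0,1)\})$. The set of normalized reduced $X$-circuits $\Lambda_X^\star(\mathcal{A})$ consists of those $\lambda\in\Lambda_X(\mathcal{A})$ for which $\{t\phi_\lambda:t\ge0\}$ is an extreme ray of $G_X(\mathcal{A})$. *)

(* Defs.v *)
From HB Require Import structures.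
From mathcomp Require Import all_boot all_order all_algebra.
From mathcomp Require Import boolp classical_sets reals ereal sequences exp.
Set Implicit Arguments. Unset Strict Implicit. Unset Printing Implicit Defensive.
Import Order.TTheory GRing.Theory Num.Theory.
Local Open Scope ring_scope.
Local Open Scope classical_set_scope.

Section XCircuits.
Variables (R : realType) (n : nat).

Definition dotp (y x : 'rV[R]_n) : R := \sum_(k < n) y 0 k * x 0 k.

Definition sigmaX (X : set 'rV[R]_n) (y : 'rV[R]_n) : \bar R :=
  ereal_sup [set (dotp y x)%:E | x in X].

Definition polyhedron (X : set 'rV[R]_n) : Prop :=
  exists (m : nat) (a : 'I_m -> 'rV[R]_n) (b : 'I_m -> R),
    X = [set x | forall k, dotp (a k) x <= b k].

Variables (I : finType) (alpha : I -> 'rV[R]_n).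
(* The finite set A = {alpha i : i in I}; R^A = functions I -> R. *)

Definition exp_lin_indep (X : set 'rV[R]_n) : Prop :=
  forall c : I -> R,
    (forall x, X x -> \sum_i c i * expR (dotp (alpha i) x) = 0) ->
    forall i, c i = 0.

Definition Amul (nu : I -> R) : 'rV[R]_n := \sum_i nu i *: alpha i.

Definition Nbeta (beta : I) : set (I -> R) :=
  [set nu | (forall i, i != beta -> 0 <= nu i) /\ \sum_i nu i = 0].

Definition sigmaA (X : set 'rV[R]_n) (nu : I -> R) : \bar R :=
  sigmaX X (- Amul nu).

Definition proportional (u v : I -> R) : Prop :=
  exists c : R, (forall i, u i = c * v i) \/ (forall i, v i = c * u i).

Definition affine_on_segment (X : set 'rV[R]_n) (nu1 nu2 : I -> R) : Prop :=
  sigmaA X nu1 \is a fin_num /\ sigmaA X nu2 \is a fin_num /\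
  forall s : R, 0 <= s <= 1 ->
    sigmaA X (fun i => s * nu1 i + (1 - s) * nu2 i) =
    (s%:E * sigmaA X nu1 + (1 - s)%:E * sigmaA X nu2)%E.

Definition X_circuit (X : set 'rV[R]_n) (beta : I) (nu : I -> R) : Prop :=
  Nbeta beta nu /\
  (exists i, nu i != 0) /\
  (sigmaA X nu < +oo)%E /\
  ~ (exists (nu1 nu2 : I -> R) (t : R),
        [/\ Nbeta beta nu1 /\ Nbeta beta nu2, ~ proportional nu1 nu2,
            0 < t < 1,
            (forall i, nu i = t * nu1 i + (1 - t) * nu2 i) &
            affine_on_segment X nu1 nu2]).

Definition LambdaX (X : set 'rV[R]_n) : set (I -> R) :=
  [set lam | exists beta, X_circuit X beta lam /\ lam beta = -1].

(* functional form (lambda, sigma_X(-A lambda)) in R^A x R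
   (sigma_X(-A lambda) is finite for X-circuits) *)
Definition phivec (X : set 'rV[R]_n) (lam : I -> R) : (I -> R) * R :=
  (lam, fine (sigmaA X lam)).

Definition phi (X : set 'rV[R]_n) (lam : I -> R) (y : I -> R) : R :=
  \sum_i y i * lam i + fine (sigmaA X lam).

Definition conic_hull (S : set ((I -> R) * R)) : set ((I -> R) * R) :=
  [set z | exists (k : nat) (p : 'I_k -> (I -> R) * R) (w : 'I_k -> R),
     (forall j, S (p j) /\ 0 <= w j) /\
     (forall i, z.1 i = \sum_j w j * (p j).1 i) /\
     z.2 = \sum_j w j * (p j).2].

Definition circuit_graph (X : set 'rV[R]_n) : set ((I -> R) * R) :=
  conic_hull ([set phivec X lam | lam in LambdaX X] `|`
              [set ((fun _ => 0), 1)]).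

Definition ray (d : (I -> R) * R) : set ((I -> R) * R) :=
  [set z | exists t : R, 0 <= t /\ (forall i, z.1 i = t * d.1 i) /\
                         z.2 = t * d.2].

Definition extreme_ray (K : set ((I -> R) * R)) (d : (I -> R) * R) : Prop :=
  ((exists i, d.1 i != 0) \/ d.2 != 0) /\
  ray d `<=` K /\
  forall u v, K u -> K v ->
    ray d ((fun i => u.1 i + v.1 i), u.2 + v.2) -> ray d u /\ ray d v.

Definition LambdaXstar (X : set 'rV[R]_n) : set (I -> R) :=
  [set lam | LambdaX X lam /\ extreme_ray (circuit_graph X) (phivec X lam)].

End XCircuits.

(* Main.v *)
Require Import Defs.
From HB Require Import structures.
From mathcomp Require Import all_boot all_order all_algebra.
From mathcomp Require Import boolp classical_sets reals ereal sequences exp.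
From mathcomp Require Import ring lra.
Import Order.TTheory GRing.Theory Num.Theory.
Local Open Scope ring_scope.
Local Open Scope classical_set_scope.

Module Aux.
Set Implicit Arguments. Unset Strict Implicit. Unset Printing Implicit Defensive.


Section FMsec.
Variable R : realType.

Lemma big_opt (T : finType) (F : option T -> R) :
  \sum_o F o = F None + \sum_t F (Some t).
Proof.
rewrite (bigD1 None) //=; congr (_ + _).
rewrite (reindex_omap Some id) => [|[i|]//].
by apply: eq_bigl => t /=; rewrite eqxx.
Qed.

Lemma interp_seq (ls us : seq R) :
  (forall a b, a \in ls -> b \in us -> a <= b) ->
  exists t, (forall a, a \in ls -> a <= t) /\ (forall b, b \in us -> t <= b).
Proof.
elim: ls => [|a ls IH] H.
  elim: us {H} => [|b us [t [_ Ht]]]; first by exists 0; split.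
  exists (Order.min b t); split => // c; rewrite inE => /orP [/eqP ->|/Ht hc].
    by rewrite ge_min lexx.
  by rewrite ge_min hc orbT.
have [t [Ht1 Ht2]] : exists t, (forall a, a \in ls -> a <= t) /\ (forall b, b \in us -> t <= b).
  by apply: IH => a' b ha hb; apply: H => //; rewrite inE ha orbT.
exists (Order.max a t); split.
  move=> c; rewrite inE => /orP [/eqP ->|/Ht1 hc]; first by rewrite le_max lexx.
  by rewrite le_max hc orbT.
move=> b hb; rewrite ge_max Ht2 // andbT; apply: H => //; by rewrite inE eqxx.
Qed.

Lemma interp_fin (C : finType) (P Q : pred C) (L U : C -> R) :
  (forall i j, P i -> Q j -> L i <= U j) ->
  exists t, (forall i, P i -> L i <= t) /\ (forall j, Q j -> t <= U j).
Proof.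
move=> H.
have [t [H1 H2]] : exists t, (forall a, a \in [seq L i | i <- enum P] -> a <= t) /\
    (forall b, b \in [seq U j | j <- enum Q] -> t <= b).
  apply: interp_seq => a b ha hb.
  case/mapP: ha => i; rewrite mem_enum => Pi ->.
  case/mapP: hb => j; rewrite mem_enum => Qj ->.
  exact: H.
exists t; split.
  by move=> i Pi; apply: H1; apply: map_f; rewrite mem_enum.
by move=> j Qj; apply: H2; apply: map_f; rewrite mem_enum.
Qed.

Lemma smallpos (C : finType) (P : pred C) (f g : C -> R) :
  (forall c, P c -> 0 < f c) ->
  exists2 e, 0 < e & forall c, P c -> e * `|g c| <= f c.
Proof.
move=> H.
have hg c : 0 < 1 + `|g c| by rewrite ltr_pwDl.
exists (\big[Order.min/1]_(c | P c) (f c / (1 + `|g c|))).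
  apply/bigmin_gtP; split => // c Pc; apply: divr_gt0 => //; exact: H.
move=> c Pc.
set e := \big[_/_]_(_ | _) _.
have he : e <= f c / (1 + `|g c|) by apply: bigmin_le_cond.
have e0 : 0 <= e.
  apply/ltW/bigmin_gtP; split => // c' Pc'; apply: divr_gt0 => //; exact: H.
rewrite ler_pdivlMr // in he.
apply: le_trans he; rewrite ler_wpM2l // lerDr //.
Qed.


Definition feas (V C : finType) (M : C -> V -> R) (d : C -> R) (z : V -> R) :=
  forall c, \sum_v M c v * z v <= d c.

Definition certif (V C : finType) (M : C -> V -> R) (d : C -> R) :=
  exists y : C -> R, (forall c, 0 <= y c) /\ (forall v, \sum_c y c * M c v = 0)
    /\ \sum_c y c * d c < 0.

Section Elim.
Variables (V C : finType) (a : C -> R).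
Definition cnd (i j : C) := (0 < a i) && (a j < 0).
Definition liftF (F : C -> R) (c' : C + C * C) : R :=
  match c' with
  | inl c => if a c == 0 then F c else 0
  | inr (i, j) => if cnd i j then a i * F j - a j * F i else 0
  end.
Definition back (y' : C + C * C -> R) (c : C) : R :=
  (if a c == 0 then y' (inl c) else 0)
  + \sum_j (if cnd c j then y' (inr (c, j)) * - a j else 0)
  + \sum_i (if cnd i c then y' (inr (i, c)) * a i else 0).

Lemma back_id y' F : \sum_c back y' c * F c = \sum_c' y' c' * liftF F c'.
Proof.
rewrite big_sumType /=.
rewrite [X in _ + X](eq_bigr (fun p => y' (inr (p.1,p.2)) * liftF F (inr (p.1,p.2)))); last by case.
rewrite -(pair_bigA _ (fun i j => y' (inr (i,j)) * liftF F (inr (i,j)))) /=.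
rewrite /back.
under eq_bigr do rewrite !mulrDl.
rewrite !big_split /= -addrA; congr (_ + _).
  by apply: eq_bigr => c _; case: ifP; rewrite ?mulr0 ?mul0r.
under eq_bigr do rewrite mulr_suml.
under [X in _ + X]eq_bigr do rewrite mulr_suml.
rewrite [X in _ + X]exchange_big /= -big_split /=; apply: eq_bigr => i _.
rewrite -big_split /=; apply: eq_bigr => j _.
by case: ifP => _; [ring | rewrite !mul0r mulr0 addr0].
Qed.

Lemma back_ge0 y' : (forall c', 0 <= y' c') -> forall c, 0 <= back y' c.
Proof.
move=> hy c; rewrite /back; apply: addr_ge0; first apply: addr_ge0.
- by case: ifP.
- apply: sumr_ge0 => j _; case: ifP => // /andP [_ hj]; apply: mulr_ge0 => //.
  by rewrite oppr_ge0 ltW.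
- apply: sumr_ge0 => i _; case: ifP => // /andP [hi _]; apply: mulr_ge0 => //.
  exact: ltW.
Qed.
End Elim.

Lemma FM_aux k : forall (V C : finType) (M : C -> V -> R) (d : C -> R) (S : {set V}),
  #|S| = k -> (forall c v, v \notin S -> M c v = 0) ->
  (forall z, ~ feas M d z) -> certif M d.
Proof.
elim: k => [|k IH] V C M d S hS hM hinf.
  have M0 c v : M c v = 0 by apply: hM; rewrite (card0_eq hS).
  have [c hc] : exists c, d c < 0.
    apply: contrapT => hn; apply: (hinf (fun _ => 0)) => c.
    rewrite big1 => [|v _]; last by rewrite mulr0.
    by rewrite leNgt; apply/negP => h; apply: hn; exists c.
  exists (fun c' => if c' == c then 1 else 0); split; [|split].
  - by move=> c'; case: ifP.
  - by move=> v; rewrite big1 // => c' _; rewrite M0 mulr0.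
  - by rewrite (bigD1 c) //= eqxx mul1r big1 ?addr0 // => c' /negbTE ->; rewrite mul0r.
have [v0 v0S] : exists v0, v0 \in S by apply/card_gt0P; rewrite hS.
pose a c := M c v0.
pose M' (c' : C + C * C) v := liftF a (fun c => M c v) c'.
pose d' := liftF a d.
have hS' : #|S :\ v0| = k by move: hS; rewrite (cardsD1 v0) v0S => -[].
have hM' c' v : v \notin S :\ v0 -> M' c' v = 0.
  rewrite !inE negb_and negbK => /orP [/eqP ->|vS].
    case: c' => [c|[i j]] /=; first by case: eqP.
    by rewrite /a; case: ifP => _ //; rewrite mulrC subrr.
  case: c' => [c|[i j]] /=; rewrite !hM // ?if_same //.
  by rewrite !mulr0 subrr if_same.
have hinf' : forall z, ~ feas M' d' z.
  move=> z hz.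
  pose zs t v := if v == v0 then t else z v.
  pose r c := \sum_v M c v * zs 0 v.
  have zsE t c : \sum_v M c v * zs t v = r c + a c * t.
    rewrite /r (bigD1 v0) //= [in RHS](bigD1 v0) //= /zs eqxx mulr0 add0r addrC.
    congr (_ + _); apply: eq_bigr => v /negbTE ->; done.
  have zE : z = zs (z v0) by apply: funext => v; rewrite /zs; case: eqP => // ->.
  have hz' c' : liftF a r c' <= d' c'.
    have := hz c'; rewrite zE.
    case: c' => [c|[i j]] /=.
      rewrite /M' /=; case: eqP => hac; last by rewrite big1 // => v _; rewrite mul0r.
      by rewrite zsE hac mul0r addr0.
    rewrite /M' /=; case: ifP => _; last by rewrite big1 // => v _; rewrite mul0r.
    rewrite (eq_bigr (fun v => a i * (M j v * zs (z v0) v) - a j * (M i v * zs (z v0) v)));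
      last by move=> v _; ring.
    rewrite big_split /= sumrN -!mulr_sumr !zsE.
    suff -> : a i * (r j + a j * z v0) - a j * (r i + a i * z v0) = a i * r j - a j * r i by [].
    ring.
  have [t [ht1 ht2]] : exists t, (forall j, a j < 0 -> (d j - r j) / a j <= t) /\
      (forall i, 0 < a i -> t <= (d i - r i) / a i).
    apply: (@interp_fin C (fun j => a j < 0) (fun i => 0 < a i)) => j i hj hi.
    have := hz' (inr (i, j)); rewrite /= /cnd hi hj /=.
    rewrite ler_pdivlMr // mulrAC ler_ndivrMr // => h.
    nra.
  apply: (hinf (zs t)) => c; rewrite zsE.
  case: (ltgtP (a c) 0) => hac.
  - have := ht1 c hac; rewrite ler_ndivrMr // => h; rewrite -lerBrDl; lra.
  - have := ht2 c hac; rewrite ler_pdivlMr // => h; rewrite -lerBrDl; lra.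
  - have := hz' (inl c); rewrite /= hac eqxx mul0r addr0 //.
have [y' [hy1 [hy2 hy3]]] := IH V _ M' d' _ hS' hM' hinf'.
exists (back a y'); split; [exact: back_ge0|split].
  move=> v; rewrite (back_id a y' (fun c => M c v)); exact: hy2.
by rewrite back_id.
Qed.

Lemma FM (V C : finType) (M : C -> V -> R) (d : C -> R) :
  (forall z, ~ feas M d z) -> certif M d.
Proof. apply: (@FM_aux _ V C M d [set: V]%SET) => // c v; by rewrite inE. Qed.

End FMsec.


Section LP.
Variables (R : realType) (n : nat).

Lemma dotp_sumZl (T : finType) (w : T -> R) (a : T -> 'rV[R]_n) x :
  dotp (\sum_k w k *: a k) x = \sum_k w k * dotp (a k) x.
Proof.
rewrite /dotp.
under eq_bigr do rewrite summxE mulr_suml.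
rewrite exchange_big /=; apply: eq_bigr => k _.
rewrite mulr_sumr; apply: eq_bigr => j _; by rewrite mxE mulrA.
Qed.

Lemma dotp_addZr (y x1 x2 : 'rV[R]_n) e :
  dotp y (x1 + e *: x2) = dotp y x1 + e * dotp y x2.
Proof.
rewrite /dotp mulr_sumr -big_split /=; apply: eq_bigr => j _.
rewrite !mxE; ring.
Qed.

Lemma dotp_oppl (y x : 'rV[R]_n) : dotp (- y) x = - dotp y x.
Proof. by rewrite /dotp -sumrN; apply: eq_bigr => j _; rewrite mxE mulNr. Qed.

Lemma dotp_row (y : 'rV[R]_n) (z : 'I_n -> R) :
  dotp y (\row_j z j) = \sum_j y 0 j * z j.
Proof. by apply: eq_bigr => j _; rewrite mxE. Qed.

Variables (m : nat) (a : 'I_m -> 'rV[R]_n) (b : 'I_m -> R).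
Let X := [set x : 'rV[R]_n | forall k, dotp (a k) x <= b k].

Lemma comb (c : 'rV[R]_n) (mu : R) (w : 'I_m -> R) :
  (forall v, mu * (- c 0 v) + \sum_k w k * a k 0 v = 0) ->
  forall x, mu * dotp c x = \sum_k w k * dotp (a k) x.
Proof.
move=> h x.
have hc v : mu * c 0 v = \sum_k w k * a k 0 v.
  by have := h v; rewrite mulrN => /eqP; rewrite addrC subr_eq0 => /eqP.
rewrite /dotp mulr_sumr.
under eq_bigr do rewrite mulrA hc mulr_suml.
rewrite exchange_big /=; apply: eq_bigr => k _.
rewrite mulr_sumr; apply: eq_bigr => j _; by rewrite mulrA.
Qed.

Lemma attain (c : 'rV[R]_n) s : (exists x0, X x0) ->
  (forall x, X x -> dotp c x <= s) ->
  (forall u, (forall x, X x -> dotp c x <= u) -> s <= u) ->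
  exists x, X x /\ dotp c x = s.
Proof.
move=> [x0 hx0] hub hlub.
apply: contrapT => hno.
pose M (o : option 'I_m) (v : 'I_n) := if o is Some k then a k 0 v else - c 0 v.
pose d (o : option 'I_m) := if o is Some k then b k else - s.
have hinf : forall z, ~ feas M d z.
  move=> z hz; apply: hno; exists (\row_j z j).
  have hX : X (\row_j z j) by move=> k; rewrite dotp_row; exact: (hz (Some k)).
  split => //; apply/eqP; rewrite eq_le hub //=.
  have := hz None; rewrite /M /d /= -lerN2 opprK -sumrN dotp_row.
  by under eq_bigr do rewrite mulNr opprK.
have [y [hy0 [hy1 hy2]]] := FM hinf.
pose mu := y None; pose w k := y (Some k).
have hmu0 : 0 <= mu by apply: hy0.
have hw0 k : 0 <= w k by apply: hy0.
have hcomb := @comb c mu w (fun v => etrans (esym (big_opt _)) (hy1 v)).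
move: hy2; rewrite big_opt /= -/mu => hy2.
have key x : X x -> mu * dotp c x <= \sum_k w k * b k.
  move=> hx; rewrite hcomb; apply: ler_sum => k _; apply: ler_wpM2l => //; exact: hx.
have hsum : \sum_k w k * b k < mu * s.
  by move: hy2; rewrite mulrN; lra.
case: (ltrgt0P mu) => hmu.
- have hs : s <= (\sum_k w k * b k) / mu.
    apply: hlub => x hx; rewrite ler_pdivlMr // mulrC; exact: key.
  move: hs; rewrite ler_pdivlMr // => hs; rewrite mulrC in hsum; lra.
- by move: hmu0; rewrite leNgt hmu.
- have := key x0 hx0; rewrite hmu mul0r => h.
  by move: hsum; rewrite hmu mul0r; lra.
Qed.

Lemma kkt (c x : 'rV[R]_n) : X x ->
  (forall x', X x' -> dotp c x' <= dotp c x) ->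
  exists w : 'I_m -> R, (forall k, 0 <= w k) /\ c = \sum_k w k *: a k /\
    (forall k, w k != 0 -> dotp (a k) x = b k).
Proof.
move=> hx hopt.
pose tight k := dotp (a k) x == b k.
pose M (o : option 'I_m) (v : 'I_n) :=
  if o is Some k then (if tight k then a k 0 v else 0) else - c 0 v.
pose d (o : option 'I_m) := if o is Some k then 0 else -1 : R.
have hinf : forall z, ~ feas M d z.
  move=> z hz.
  pose zr := \row_j z j.
  have [e he0 he] : exists2 e, 0 < e & forall k, ~~ tight k ->
      e * `|dotp (a k) zr| <= b k - dotp (a k) x.
    apply: smallpos => k hk.
    rewrite subr_gt0 lt_neqAle; rewrite /tight in hk; rewrite hk hx //.
  have hx' : X (x + e *: zr).
    move=> k; rewrite dotp_addZr.
    case htk: (tight k).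
      have := hz (Some k); rewrite /M /d htk -dotp_row => h.
      move/eqP: htk => <-; rewrite -[X in _ <= X]addr0 lerD2l.
      by rewrite mulr_ge0_le0 // ltW.
    have := he k (negbT htk) => h.
    have := ler_norm (dotp (a k) zr) => h2.
    have : e * dotp (a k) zr <= e * `|dotp (a k) zr| by rewrite ler_wpM2l // ltW.
    lra.
  have h1 : 1 <= dotp c zr.
    rewrite dotp_row; have := hz None; rewrite /M /d /=.
    under eq_bigr do rewrite mulNr.
    rewrite sumrN; lra.
  have := hopt _ hx'; rewrite dotp_addZr.
  have : e <= e * dotp c zr.
    by rewrite -[X in X <= _]mulr1 ler_pM2l.
  lra.
have [y [hy0 [hy1 hy2]]] := FM hinf.
pose mu := y None; pose u k := y (Some k).
move: hy2; rewrite big_opt /= big1 => [|k _]; last by rewrite mulr0.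
rewrite addr0 mulrN1 oppr_lt0 -/mu => hmu.
exists (fun k => if tight k then u k / mu else 0); split; [|split].
- move=> k; case: ifP => // _; apply: divr_ge0 => //; [exact: hy0|exact: ltW].
- apply/rowP => j; rewrite summxE.
  have := hy1 j; rewrite big_opt /= => /eqP; rewrite mulrN addrC subr_eq0 => /eqP h.
  apply: (mulfI (lt0r_neq0 hmu)); rewrite -h mulr_sumr; apply: eq_bigr => k _.
  rewrite mxE; case: ifP => _; last by rewrite mulr0 mul0r mulr0.
  have := lt0r_neq0 hmu; rewrite /u => hmu'; field; exact: hmu'.
- move=> k; rewrite /tight; case: (dotp (a k) x =P b k) => // _; by rewrite eqxx.
Qed.

Lemma sigma_eval (c x : 'rV[R]_n) (w : 'I_m -> R) : X x ->
  (forall k, 0 <= w k) -> c = \sum_k w k *: a k ->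
  (forall k, w k != 0 -> dotp (a k) x = b k) ->
  sigmaX X c = (dotp c x)%:E.
Proof.
move=> hx hw hc ht.
have ub x' : X x' -> dotp c x' <= dotp c x.
  move=> hx'; rewrite hc !dotp_sumZl; apply: ler_sum => k _.
  have [->|hk] := eqVneq (w k) 0; first by rewrite !mul0r.
  by rewrite ht // ler_wpM2l.
apply/eqP; rewrite eq_le; apply/andP; split.
  apply: ge_ereal_sup => _ [x' hx' <-]; rewrite lee_fin; exact: ub.
by apply: ereal_sup_ubound; exists x.
Qed.

End LP.


Section Circ.
Variables (R : realType) (n : nat) (I : finType) (alpha : I -> 'rV[R]_n).

Lemma lincomb (T : finType) (f : T -> 'rV[R]_n) (u v : T -> R) p q :
  \sum_k (p * u k + q * v k) *: f k = p *: \sum_k u k *: f k + q *: \sum_k v k *: f k.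
Proof.
rewrite !scaler_sumr -big_split /=; apply: eq_bigr => k _.
by rewrite scalerDl !scalerA.
Qed.

Lemma Amul_lin (u v : I -> R) p q :
  Amul alpha (fun i => p * u i + q * v i) = p *: Amul alpha u + q *: Amul alpha v.
Proof. exact: lincomb. Qed.

Lemma dotp_linl (u v x : 'rV[R]_n) p q :
  dotp (p *: u + q *: v) x = p * dotp u x + q * dotp v x.
Proof.
rewrite /dotp !mulr_sumr -big_split /=; apply: eq_bigr => j _.
rewrite !mxE; ring.
Qed.

Variables (m : nat) (a : 'I_m -> 'rV[R]_n) (b : 'I_m -> R).
Let X := [set x : 'rV[R]_n | forall k, dotp (a k) x <= b k].

Definition cdata (lam : I -> R) (beta : I) (x : 'rV[R]_n) (w : 'I_m -> R) :=
  [/\ X_circuit alpha X beta lam, lam beta = -1, X x, (forall k, 0 <= w k) &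
      (- Amul alpha lam = \sum_k w k *: a k /\
      (forall k, w k != 0 -> dotp (a k) x = b k))].

Lemma cdata_exists lam : (exists x0, X x0) -> LambdaX alpha X lam ->
  exists beta x w, cdata lam beta x w.
Proof.
move=> [x0 hx0] [beta [hc hb]].
have hcirc := hc; case: hc => _ [_ [hfin _]].
set c := - Amul alpha lam.
have hsig : sigmaA alpha X lam = sigmaX X c by [].
have hge x : X x -> ((dotp c x)%:E <= sigmaX X c)%E.
  by move=> hx; apply: ereal_sup_ubound; exists x.
have hfn : sigmaX X c \is a fin_num.
  rewrite fin_numE; apply/andP; split.
    by apply/eqP => h; have := hge _ hx0; rewrite h.
  by rewrite -hsig lt_eqF.
set s := fine (sigmaX X c).
have hsE : sigmaX X c = s%:E by rewrite fineK.
have [x [hx hxs]] := @attain R n m a b c s (ex_intro _ x0 hx0)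
  (fun x hx => ltac:(by have := hge x hx; rewrite hsE lee_fin))
  (fun u hu => ltac:(by rewrite -lee_fin -hsE; apply: ge_ereal_sup => _ [x' hx' <-]; rewrite lee_fin; exact: hu)).
have [w [hw0 [hcw ht]]] := @kkt R n m a b c x hx
  (fun x' hx' => ltac:(by rewrite hxs; have := hge x' hx'; rewrite hsE lee_fin)).
by exists beta, x, w; split.
Qed.


Lemma sigma_on (x1 : 'rV[R]_n) (w1 : 'I_m -> R) nu w : X x1 ->
  (forall k, w1 k != 0 -> dotp (a k) x1 = b k) ->
  (forall k, 0 <= w k) -> - Amul alpha nu = \sum_k w k *: a k ->
  (forall k, w k != 0 -> w1 k != 0) ->
  sigmaA alpha X nu = (dotp (- Amul alpha nu) x1)%:E.
Proof.
move=> hx1 ht hw hnu hsub.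
apply: (@sigma_eval R n m a b _ x1 w) => // k hk; exact/ht/hsub.
Qed.

Lemma inj_core lam1 lam2 beta x1 w1 x2 w2 :
  cdata lam1 beta x1 w1 -> cdata lam2 beta x2 w2 ->
  (forall i, (lam1 i == 0) = (lam2 i == 0)) ->
  (forall k, (w1 k == 0) = (w2 k == 0)) -> lam1 = lam2.
Proof.
move=> [hc1 hb1 hx1 hw1 [hA1 ht1]] [hc2 hb2 hx2 hw2 [hA2 ht2]] hsl hsw.
apply: contrapT => hne.
case: hc1 => [[hN1 hs1] [_ [_ hnot]]].
case: hc2 => [[hN2 hs2] _].
have [e1 he1 he1'] : exists2 e, 0 < e & forall i, lam1 i != 0 ->
    e * `|lam1 i - lam2 i| <= `|lam1 i|.
  by apply: smallpos => i hi; rewrite normr_gt0.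
have [e2 he2 he2'] : exists2 e, 0 < e & forall k, w1 k != 0 ->
    e * `|w1 k - w2 k| <= `|w1 k|.
  by apply: smallpos => k hk; rewrite normr_gt0.
pose e := Order.min e1 e2.
have he0 : 0 < e by rewrite lt_min he1 he2.
have hee1 : e <= e1 by rewrite ge_min lexx.
have hee2 : e <= e2 by rewrite ge_min lexx orbT.
have small (p q : R) (ep : R) : 0 <= p -> p != 0 -> e <= ep -> ep * `|p - q| <= `|p| ->
    0 <= (1 + e) * p + (- e) * q.
  move=> hp hp0 hep h.
  have hn : `|p| = p by rewrite ger0_norm.
  have h1 : e * `|p - q| <= ep * `|p - q| by apply: ler_wpM2r.
  have h2 : e * (q - p) <= e * `|p - q|.
    by apply: ler_wpM2l; [exact: ltW | rewrite distrC; exact: ler_norm].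
  rewrite hn in h; nra.
pose mu := fun i => (1 + e) * lam1 i + (- e) * lam2 i.
pose wmu := fun k => (1 + e) * w1 k + (- e) * w2 k.
have hmu0 i : i != beta -> 0 <= mu i.
  move=> hi; have [h0|h0] := eqVneq (lam1 i) 0.
    have : lam2 i == 0 by rewrite -hsl h0.
    by move/eqP => h2; rewrite /mu h0 h2 !mulr0 addr0.
  by apply: (small _ _ e1) => //; [exact: hN1|exact: he1'].
have hwmu0 k : 0 <= wmu k.
  have [h0|h0] := eqVneq (w1 k) 0.
    have : w2 k == 0 by rewrite -hsw h0.
    by move/eqP => h2; rewrite /wmu h0 h2 !mulr0 addr0.
  by apply: (small _ _ e2) => //; exact: he2'.
have hwsub k : wmu k != 0 -> w1 k != 0.
  apply: contraNN => /eqP h0; have : w2 k == 0 by rewrite -hsw h0.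
  by move/eqP => h2; rewrite /wmu h0 h2 !mulr0 addr0.
have hAmu : - Amul alpha mu = \sum_k wmu k *: a k.
  by rewrite Amul_lin lincomb -hA1 -hA2 !scalerN opprD.
have hNmu : Nbeta beta mu.
  split => //; rewrite big_split /= -!mulr_sumr hs1 hs2; ring.
have hmub : mu beta = -1 by rewrite /mu hb1 hb2; ring.
have he1n : 1 + e != 0 by rewrite lt0r_neq0 // addr_gt0.
apply: hnot; exists mu, lam2, (1 + e)^-1; split.
- by split.
- have hcontr : (forall i, mu i = lam2 i) -> False.
    move=> h; apply: hne; apply: funext => i; have := h i; rewrite /mu.
    move=> h'; apply: (mulfI he1n); nra.
  case => c [] h; apply: hcontr.
    have hc : c = 1 by have := h beta; rewrite hmub hb2; lra.
    by move=> i; rewrite h hc mul1r.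
  have hc : c = 1 by have := h beta; rewrite hmub hb2; lra.
  by move=> i; rewrite h hc mul1r.
- by rewrite invr_gt0 addr_gt0 //= invf_lt1 ?addr_gt0 // ltrDl.
- move=> i; rewrite /mu; field => //.
- split; [|split].
  + by rewrite (@sigma_on x1 w1 mu wmu).
  + by rewrite (@sigma_on x1 w1 lam2 w2) // => k; rewrite -hsw.
  + move=> s /andP [hs0 hs1'].
    set nu := fun i => _.
    pose wnu := fun k => s * wmu k + (1 - s) * w2 k.
    have hwnu0 k : 0 <= wnu k.
      by apply: addr_ge0; apply: mulr_ge0 => //; rewrite subr_ge0.
    have hAnu : - Amul alpha nu = \sum_k wnu k *: a k.
      by rewrite Amul_lin lincomb -hAmu -hA2 !scalerN opprD.
    have hwnus k : wnu k != 0 -> w1 k != 0.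
      apply: contraNN => /eqP h0; have : w2 k == 0 by rewrite -hsw h0.
      move/eqP => h2; have : wmu k = 0 by rewrite /wmu h0 h2 !mulr0 addr0.
      by move=> h3; rewrite /wnu h3 h2 !mulr0 addr0.
    rewrite (@sigma_on x1 w1 nu wnu) // (@sigma_on x1 w1 mu wmu) //.
    rewrite (@sigma_on x1 w1 lam2 w2) // => [|k]; last by rewrite -hsw.
    by rewrite Amul_lin opprD -!scalerN dotp_linl EFinD !EFinM.
Qed.

End Circ.


Section Final.
Variables (R : realType) (n : nat) (I : finType) (alpha : I -> 'rV[R]_n).
Variables (m : nat) (a : 'I_m -> 'rV[R]_n) (b : 'I_m -> R).
Let X := [set x : 'rV[R]_n | forall k, dotp (a k) x <= b k].

Lemma key_exists : (exists x0, X x0) ->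
  exists (F : finType) (key : (I -> R) -> F), forall l1 l2,
    LambdaX alpha X l1 -> LambdaX alpha X l2 -> key l1 = key l2 -> l1 = l2.
Proof.
move=> hx0.
pose P l (p : I * 'rV[R]_n * ('I_m -> R)) := cdata alpha a b l p.1.1 p.1.2 p.2.
pose key l : option (I * {ffun I -> bool} * {ffun 'I_m -> bool}) :=
  match pselect (exists p, P l p) with
  | left h => let p := proj1_sig (cid h) in
      Some (p.1.1, [ffun i => l i != 0], [ffun k => p.2 k != 0])
  | right _ => None
  end.
exists (option (I * {ffun I -> bool} * {ffun 'I_m -> bool}))%type, key.
move=> l1 l2 hl1 hl2; rewrite /key.
case: pselect => [h1|h1]; last first.
  by exfalso; apply: h1; have [be [x [w h]]] := cdata_exists hx0 hl1; exists (be, x, w).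
case: pselect => [h2|h2]; last first.
  by exfalso; apply: h2; have [be [x [w h]]] := cdata_exists hx0 hl2; exists (be, x, w).
case: (cid h1) => [[[be1 x1] w1] hp1]; case: (cid h2) => [[[be2 x2] w2] hp2] /= [hbe hs hw].
move: hp1 hp2; rewrite /P /= -hbe => hp1 hp2.
apply: (inj_core hp1 hp2).
  move=> i; have := congr1 (fun f : {ffun I -> bool} => f i) hs; rewrite !ffunE => h.
  by apply: negb_inj.
move=> k; have := congr1 (fun f : {ffun 'I_m -> bool} => f k) hw; rewrite !ffunE => h.
by apply: negb_inj.
Qed.


Lemma lam_nonneg l : LambdaX alpha X l ->
  exists be, l be = -1 /\ forall i, i != be -> 0 <= l i.
Proof. by move=> [be [[[hN _] _] hb]]; exists be. Qed.

Lemma lam_sigma l : (exists x0, X x0) -> LambdaX alpha X l ->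
  exists r, sigmaA alpha X l = r%:E.
Proof.
move=> hx0 hl; have [be [x [w [_ _ hx hw [hA ht]]]]] := cdata_exists hx0 hl.
exists (dotp (- Amul alpha l) x).
by apply: (sigma_on (w1 := w) (w := w)).
Qed.

Lemma phi_y0 x0 l : X x0 -> LambdaX alpha X l ->
  0 <= phi alpha X l (fun i => dotp (alpha i) x0).
Proof.
move=> hx0 hl; have [r hr] := lam_sigma (ex_intro _ x0 hx0) hl.
rewrite /phi hr /=.
have hge : ((dotp (- Amul alpha l) x0)%:E <= sigmaA alpha X l)%E.
  by apply: ereal_sup_ubound; exists x0.
rewrite hr lee_fin dotp_oppl /Amul dotp_sumZl in hge.
suff -> : \sum_i dotp (alpha i) x0 * l i = \sum_i l i * dotp (alpha i) x0 by lra.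
by apply: eq_bigr => i _; rewrite mulrC.
Qed.

Lemma conic_fin (T : finType) (S : set ((I -> R) * R)) (p : T -> (I -> R) * R)
  (w : T -> R) : (forall t, S (p t) /\ 0 <= w t) ->
  conic_hull S ((fun i => \sum_t w t * (p t).1 i), \sum_t w t * (p t).2).
Proof.
move=> h; exists #|T|, (fun j => p (enum_val j)), (fun j => w (enum_val j)).
split; first by move=> j; exact: h.
split; last by rewrite /= -(big_enum_val (A := T) (fun t => w t * (p t).2)).
by move=> i; rewrite /= -(big_enum_val (A := T) (fun t => w t * (p t).1 i)).
Qed.


Lemma main_sep x0 (hx0 : X x0) (Lam : set (I -> R))
  (hLam : Lam `<` LambdaXstar alpha X) :
  exists ytil : I -> R,
    (forall lam', Lam lam' -> 0 <= phi alpha X lam' ytil) /\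
    exists lam, LambdaXstar alpha X lam /\ ~ Lam lam /\
                phi alpha X lam ytil < 0.
Proof.
have [F [key hkey]] := key_exists (ex_intro _ x0 hx0).
case: hLam => hsub hnsub.
have [lam0 [hl0 hnl0]] : exists lam0, LambdaXstar alpha X lam0 /\ ~ Lam lam0.
  apply: contrapT => h; apply: hnsub => l hl; apply: contrapT => hn; apply: h; by exists l.
have hLX l : LambdaXstar alpha X l -> LambdaX alpha X l by case.
have hLL l : Lam l -> LambdaX alpha X l by move=> hl; apply: hLX; exact: hsub.
pose pk (k : F) : option (I -> R) :=
  match pselect (exists l, Lam l /\ key l = k) with
  | left h => Some (proj1_sig (cid h)) | right _ => None end.
have hpk1 k l : pk k = Some l -> Lam l /\ key l = k.
  rewrite /pk; case: pselect => // h [<-]; by case: (cid h).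
have hpk2 l : Lam l -> pk (key l) = Some l.
  move=> hl; rewrite /pk; case: pselect => [h|h]; last by exfalso; apply: h; exists l.
  case: (cid h) => l' [hl' hk] /=; congr Some; apply: hkey => //; exact: hLL.
pose pvg (p : (I -> R) * R) (v : option I) := if v is Some i then p.1 i else p.2.
pose M (c : option (option F)) (v : option I) : R :=
  match c with
  | None => pvg (phivec alpha X lam0) v
  | Some None => if v is None then -1 else 0
  | Some (Some k) => if pk k is Some l then - pvg (phivec alpha X l) v else 0
  end.
pose d (c : option (option F)) : R := if c is None then -1 else 0.
have Sdef p z : \sum_v pvg p v * z v = p.2 * z None + \sum_i p.1 i * z (Some i).
  by rewrite big_opt.
have [be0 [hbe0 hnn0]] := lam_nonneg (hLX _ hl0).
case: (pselect (exists z, feas M d z)) => [[z hz]|hnf].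
- have hz0 : 0 <= z None.
    have := hz (Some None); rewrite /M /d big_opt /= big1 ?addr0 => [|i _]; last by rewrite mul0r.
    lra.
  have hzL l : Lam l -> 0 <= \sum_v pvg (phivec alpha X l) v * z v.
    move=> hl; have := hz (Some (Some (key l))); rewrite /M /d hpk2 //.
    under eq_bigr do rewrite mulNr.
    by rewrite sumrN oppr_le0.
  have hz1 : \sum_v pvg (phivec alpha X lam0) v * z v <= -1 by exact: hz None.
  case: (ltrgt0P (z None)) => hs; last 1 first.
  + pose y0 := fun i => dotp (alpha i) x0.
    pose t := `|phi alpha X lam0 y0| + 1.
    have ht0 : 0 <= t by rewrite addr_ge0.
    have hphi l : phi alpha X l (fun i => t * z (Some i) + y0 i) =
        t * \sum_v pvg (phivec alpha X l) v * z v + phi alpha X l y0.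
      rewrite Sdef hs mulr0 add0r /phi /= addrA; congr (_ + _).
      rewrite mulr_sumr -big_split /=; apply: eq_bigr => i _; ring.
    exists (fun i => t * z (Some i) + y0 i); split.
      move=> l hl; rewrite hphi; apply: addr_ge0.
        by apply: mulr_ge0 => //; exact: hzL.
      exact: (phi_y0 hx0 (hLL _ hl)).
    exists lam0; split => //; split => //; rewrite hphi.
    have h1 : t * \sum_v pvg (phivec alpha X lam0) v * z v <= - t.
      by rewrite -mulrN1 ler_wpM2l.
    have h2 := ler_norm (phi alpha X lam0 y0).
    rewrite /t in h1 h2 *; lra.
  + have hs0 : z None != 0 by rewrite lt0r_neq0.
    have hphi l : phi alpha X l (fun i => z (Some i) / z None) =
        (\sum_v pvg (phivec alpha X l) v * z v) / z None.
      rewrite Sdef /phi /= mulrDl mulfK // addrC mulr_suml; congr (_ + _).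
      by apply: eq_bigr => i _; field.
    exists (fun i => z (Some i) / z None); split.
      by move=> l hl; rewrite hphi divr_ge0 ?hzL // ltW.
    exists lam0; split => //; split => //; rewrite hphi.
    by rewrite ltr_pdivrMr // mul0r; lra.
  + by move: hz0; rewrite leNgt hs.
- exfalso.
  have [y [hy0 [hy1 hy2]]] := FM (fun z hz => hnf (ex_intro _ z hz)).
  pose yt := y None.
  have hyt : 0 < yt.
    move: hy2; rewrite big_opt /= big1 => [|o _]; last by rewrite /d mulr0.
    by rewrite addr0 mulrN1 oppr_lt0.
  pose gen (o : option F) : (I -> R) * R :=
    match o with
    | None => ((fun _ => 0), 1)
    | Some k => if pk k is Some l then phivec alpha X l else ((fun _ => 0), 1)
    end.
  pose om (o : option F) : R :=
    match o with
    | None => y (Some None)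
    | Some k => if pk k is Some l then y (Some (Some k)) else 0
    end.
  have hom0 o : 0 <= om o by case: o => [k|] /=; [case: (pk k)|].
  pose G := [set phivec alpha X lam | lam in LambdaX alpha X] `|`
            [set ((fun _ : I => 0 : R), 1 : R)].
  have hgen o : G (gen o).
    case: o => [k|] /=; last by right.
    case hk: (pk k) => [l|]; last by right.
    by left; exists l => //; apply: hLL; case: (hpk1 _ _ hk).
  have E v : \sum_c y c * M c v =
      yt * pvg (phivec alpha X lam0) v - \sum_o om o * pvg (gen o) v.
    rewrite big_opt big_opt [X in _ - X]big_opt /= opprD; congr (_ + _).
    congr (_ + _); first by case: v => [i|] /=; rewrite ?mulr0 ?oppr0 ?mulrN1 ?mulr1.
    rewrite -sumrN; apply: eq_bigr => k _; case: (pk k) => [l|] /=.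
      by rewrite mulrN.
    by rewrite mulr0 mul0r oppr0.
  have heq v : yt * pvg (phivec alpha X lam0) v = \sum_o om o * pvg (gen o) v.
    by apply/eqP; rewrite -subr_eq0 -E hy1.
  have [j hj] : exists j, 0 < om j.
    apply: contrapT => hn.
    have hz o : om o = 0.
      apply/eqP; rewrite eq_le hom0 andbT leNgt; apply/negP => h; apply: hn; by exists o.
    have := heq (Some be0); rewrite big1 => [|o _]; last by rewrite hz mul0r.
    rewrite /= hbe0 mulrN1 => /eqP; rewrite oppr_eq0 => /eqP h.
    by move: hyt; rewrite h ltxx.
  pose w' o := if o == j then 0 else om o.
  pose u := ((fun i => om j * (gen j).1 i), om j * (gen j).2).
  pose vv := ((fun i => \sum_o w' o * (gen o).1 i), \sum_o w' o * (gen o).2).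
  have hu : circuit_graph alpha X u.
    exists 1%N, (fun _ => gen j), (fun _ => om j).
    split; first by move=> _; split; [exact: hgen|exact: hom0].
    by split; [move=> i|]; rewrite /= big_ord1.
  have hv : circuit_graph alpha X vv.
    apply: conic_fin => o; split; first exact: hgen.
    by rewrite /w'; case: eqP.
  have hsplit (g : option F -> R) :
      om j * g j + \sum_o w' o * g o = \sum_o om o * g o.
    rewrite [in RHS](bigD1 j) //= (bigD1 j) //= /w' eqxx mul0r add0r; congr (_ + _).
    by apply: eq_bigr => o /negbTE ->.
  have hray : ray (phivec alpha X lam0)
      ((fun i => u.1 i + vv.1 i), u.2 + vv.2).
    exists yt; split; first exact: ltW.
    split.
      move=> i; rewrite /= hsplit.
      by have := heq (Some i); rewrite /=.
    by rewrite /= hsplit; have := heq None; rewrite /=.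
  case: hl0 => _ [_ [_ hprop]].
  have [[t [ht0 [ht1 ht2]]] _] := hprop u vv hu hv hray.
  move: ht1 ht2; rewrite /u /= => ht1 ht2.
  clear hsplit hray hu hv u vv w'.
  case: j hj ht1 ht2 => [k|] hj ht1 ht2.
  + move: hj ht1 ht2 => /=; case hk: (pk k) => [l|] /=; last by rewrite ltxx.
    move=> hj ht1 _.
    have [hlL _] := hpk1 _ _ hk.
    have [be [hbe hnn]] := lam_nonneg (hLL _ hlL).
    have h1 := ht1 be; rewrite hbe mulrN1 in h1.
    have hbb : be = be0.
      apply: contrapT => /eqP hne.
      have := hnn0 _ hne => h2.
      have : 0 <= t * lam0 be by apply: mulr_ge0.
      lra.
    move: h1; rewrite hbb hbe0 mulrN1 => /eqP; rewrite eqr_opp => /eqP htj.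
    apply: hnl0; suff -> : lam0 = l by [].
    apply: funext => i; have := ht1 i; rewrite -htj => /mulfI -> //.
    exact: lt0r_neq0.
  + move: ht1 ht2 => /= ht1 ht2.
    have := ht1 be0; rewrite hbe0 mulr0 mulrN1 => /eqP; rewrite eq_sym oppr_eq0 => /eqP ht.
    move: ht2; rewrite ht mul0r mulr1 => h.
    by move: hj => /=; rewrite h ltxx.
Qed.

End Final.

End Aux.
Import Aux.

Theorem lemma5p12 (R : realType) (n : nat) (I : finType)
  (alpha : I -> 'rV[R]_n) (X : set 'rV[R]_n)
  (hI : (0 < #|I|)%N) (halpha : injective alpha)
  (hXne : X !=set0) (hXpoly : polyhedron X)
  (hexp : exp_lin_indep alpha X)
  (Lam : set (I -> R)) (hLam : Lam `<` LambdaXstar alpha X) :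
  exists ytil : I -> R,
    (forall lam', Lam lam' -> 0 <= phi alpha X lam' ytil) /\
    exists lam, LambdaXstar alpha X lam /\ ~ Lam lam /\
                phi alpha X lam ytil < 0.
Proof.
case: hXpoly => m [a [b hX]]; subst X.
case: hXne => x0 hx0.
exact: (main_sep hx0 hLam).
Qed.
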